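(* Let $j\ge 0$ be an integer and let $g_0^{j+1},\dots,g_j^{j+1}$ be real numbers with $g_j^{j+1}>g_{j-1}^{j+1}>\dots>g_0^{j+1}>0$, where $g_{-1}^{j+1}:=0$. Let $\sigma_{j+1}$ satisfy $$\frac{g_j^{j+1}}{2g_j^{j+1}-g_{j-1}^{j+1}}\le\sigma_{j+1}\le 1 .$$ Then for any real numbers $v^0,\dots,v^{j+1}$, $$\big(\sigma_{j+1}v^{j+1}+(1-\sigma_{j+1})v^j\big)\,{}_g\Delta v\;\ge\;\tfrac12\,{}_g\Delta(v^2),$$ where ${}_g\Delta v:=\sum_{s=0}^{j}(v^{s+1}-v^s)g_s^{j+1}$ and ${}_g\Delta(v^2):=\sum_{s=0}^{j}((v^{s+1})^2-(v^s)^2)g_s^{j+1}$.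
   Context: In the paper this is stated for all $j=0,1,\dots,M-1$ with $v$ a function on a time mesh $0=t_0<\dots<t_M=T$, $v^s=v(t_s)$. *)

(* Defs.v *)
From mathcomp Require Import all_boot all_order all_algebra.
Set Implicit Arguments. Unset Strict Implicit. Unset Printing Implicit Defensive.
Import Order.TTheory GRing.Theory Num.Theory.
Local Open Scope ring_scope.

(* g s stands for g_s^{j+1}; v s stands for v^s. *)

Definition gprev (R : ringType) (g : nat -> R) (j : nat) : R :=
  if j is j'.+1 then g j' else 0.

Definition gDelta (R : ringType) (g : nat -> R) (j : nat) (v : nat -> R) : R :=
  \sum_(0 <= s < j.+1) (v s.+1 - v s) * g s.

Definition gDelta_sq (R : ringType) (g : nat -> R) (j : nat) (v : nat -> R) : R :=
  \sum_(0 <= s < j.+1) (v s.+1 ^+ 2 - v s ^+ 2) * g s.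

(* Main.v *)
Require Import Defs.
From mathcomp Require Import all_boot all_order all_algebra.
From mathcomp Require Import ring lra.
Import Order.TTheory GRing.Theory Num.Theory.
Local Open Scope ring_scope.

Lemma tele (R : realFieldType) (g : nat -> R) n :
  \sum_(0 <= s < n.+1) (g s - gprev g s) = g n.
Proof.
elim: n => [|n IH]; first by rewrite big_nat1 /= subr0.
rewrite big_nat_recr //= IH; ring.
Qed.

Arguments tele {R} g n.

Lemma sbp (R : realFieldType) (g : nat -> R) (f : nat -> R) n :
  \sum_(0 <= s < n.+1) (f s.+1 - f s) * g s =
  \sum_(0 <= s < n.+1) (g s - gprev g s) * (f n.+1 - f s).
Proof.
elim: n => [|n IH]; first by rewrite !big_nat1 /=; ring.
rewrite big_nat_recr //= IH [RHS]big_nat_recr //=.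
have -> : \sum_(0 <= s < n.+1) (g s - gprev g s) * (f n.+2 - f s) =
  \sum_(0 <= s < n.+1) ((g s - gprev g s) * (f n.+1 - f s) +
     (g s - gprev g s) * (f n.+2 - f n.+1)).
  by apply: eq_bigr => s _; ring.
rewrite big_split /= -mulr_suml tele; ring.
Qed.

Arguments sbp {R} g f n.

Lemma gpos (R : realFieldType) (g : nat -> R) j :
  0 < g 0%N -> (forall s : nat, (s < j)%N -> g s < g s.+1) ->
  forall s, (s <= j)%N -> 0 < g s.
Proof.
move=> g0 gi; elim=> [//|s IH] Hs.
apply: lt_trans (IH (ltnW Hs)) (gi _ Hs).
Qed.

Arguments gpos {R g j} _ _ s _.

Theorem corollary1 (R : realFieldType) (j : nat) (g : nat -> R) (sigma : R)
    (g0_pos : 0 < g 0%N)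
    (g_incr : forall s : nat, (s < j)%N -> g s < g s.+1)
    (sigma_lo : g j / (2 * g j - gprev g j) <= sigma)
    (sigma_hi : sigma <= 1)
    (v : nat -> R) :
  (sigma * v j.+1 + (1 - sigma) * v j) * gDelta g j v >= 2^-1 * gDelta_sq g j v.
Proof.
set A := gprev g j.
have gjp : 0 < g j by exact: (gpos g0_pos g_incr j (leqnn j)).
have [A0 Alt] : 0 <= A /\ A < g j.
  rewrite /A; case: j g_incr gjp sigma_lo {A} => [|j] gi gjp _ /=; first by split.
  split; last exact: gi.
  by apply/ltW; apply: (gpos g0_pos gi j (leqnSn j)).
have Ha : forall s, (s < j)%N -> 0 <= g s - gprev g s.
  move=> [|s] Hs /=; first by rewrite subr0 ltW.
  by rewrite subr_ge0 ltW // g_incr // ltnW.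
have den : 0 < 2 * g j - A by lra.
have Hs : g j <= sigma * (2 * g j - A) by rewrite -ler_pdivrMr.
set c := 1 - sigma.
set u := v j.+1.
set x := u - v j.
rewrite /gDelta /gDelta_sq (sbp g v) (sbp g (fun s => v s ^+ 2)).
rewrite mulr_sumr mulr_sumr -subr_ge0 -sumrB.
set a := fun s => g s - gprev g s.
have -> : \sum_(0 <= i < j.+1)
    ((sigma * v j.+1 + (1 - sigma) * v j) * (a i * (v j.+1 - v i)) -
     2^-1 * (a i * (v j.+1 ^+ 2 - v i ^+ 2))) =
  \sum_(0 <= i < j.+1) (2^-1 * a i * ((u - v i) - c * x) ^+ 2
     - 2^-1 * c ^+ 2 * x ^+ 2 * a i).
  by apply: eq_bigr => i _; rewrite /c /x /u; field.
rewrite big_nat_recr //= sumrB -mulr_sumr.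
have -> : \sum_(0 <= i < j) a i = A.
  rewrite /A /a; case: (j) => [|k]; first by rewrite big_geq.
  by rewrite tele.
have S0 : 0 <= \sum_(0 <= i < j) 2^-1 * a i * (u - v i - c * x) ^+ 2.
  rewrite big_nat; apply: sumr_ge0 => i /andP[_ Hi].
  by rewrite mulr_ge0 ?sqr_ge0 // mulr_ge0 ?invr_ge0 ?ler0n //; exact: Ha.
have -> : u - v j - c * x = (1 - c) * x by rewrite /x; ring.
rewrite /a -/A.
have Hc : 0 <= c by rewrite /c subr_ge0.
have Hx : 0 <= x ^+ 2 by apply: sqr_ge0.
have key : c ^+ 2 * A <= (g j - A) * (1 - 2 * c).
  have H1 : c * (2 * g j - A) <= g j - A by rewrite /c; lra.
  have H2 : 0 <= 1 - 2 * c.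
    have : 2 * c * (2 * g j - A) <= 1 * (2 * g j - A) by nra.
    by rewrite ler_pM2r // subr_ge0.
  have H3 : c * A <= A / 2.
    have : c <= 2^-1.
      have : 2 * c <= 1 by lra.
      lra.
    nra.
  have H4 : c * (4 * g j - A) <= 2 * g j - A by nra.
  have H5 : c * (2 * g j - A) * (1 - 2 * c) <= (g j - A) * (1 - 2 * c).
    by apply: ler_wpM2r.
  nra.
nra.
Qed.
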